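(* Let $p$ be an odd prime, $x\in\mathbb Z_p$ and $x\not\equiv-1\pmod p$. Then $$P_{\frac{p-1}2}(x)\equiv\Big(\frac{2(x+1)}p\Big)P_{\frac{p-1}2}\Big(\frac{3-x}{1+x}\Big)\pmod p.$$
   Context: $\mathbb Z_p$ denotes the set of rational numbers whose denominator (in lowest terms) is prime to $p$; congruences are in this ring. $P_n(x)$ is the $n$-th Legendre polynomial, defined by $\frac1{\sqrt{1-2xt+t^2}}=\sum_{n\ge0}P_n(x)t^n$, equivalently $P_n(x)=\frac1{2^n}\sum_{k=0}^{[n/2]}\frac{(-1)^k(2n-2k)!}{k!(n-k)!(n-2k)!}x^{n-2k}$. For $a\in\mathbb Z_p$, $\big(\frac ap\big)$ is the Legendre symbol of the residue of $a$ modulo $p$. *)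

(* Defs.v *)
From mathcomp Require Import all_boot all_order all_algebra.
Set Implicit Arguments. Unset Strict Implicit. Unset Printing Implicit Defensive.
Import Order.TTheory GRing.Theory Num.Theory.
Local Open Scope ring_scope.

Definition in_Zp (p : nat) (x : rat) : bool := coprime `|denq x|%N p.

Definition congp (p : nat) (a b : rat) : bool := in_Zp p ((a - b) / p%:R).

Definition legendre_sym (p : nat) (a : rat) : rat :=
  if congp p a 0 then 0
  else if [exists r : 'I_p, congp p a ((nat_of_ord r)%:R ^+ 2)] then 1 else -1.

Definition legendreP (n : nat) (x : rat) : rat :=
  (2 ^+ n)^-1 * \sum_(0 <= k < (n./2).+1)
     ((-1) ^+ k * ((2 * n - 2 * k)`!)%:R
        / ((k`!)%:R * ((n - k)`!)%:R * ((n - 2 * k)`!)%:R) * x ^+ (n - 2 * k)).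

(* Main.v *)
Require Import Defs.
From mathcomp Require Import all_boot all_order all_algebra.
From mathcomp Require Import all_field.
From mathcomp Require Import ring zify.
Import GRing.Theory Num.Theory.
Local Open Scope ring_scope.

Set Implicit Arguments. Unset Strict Implicit. Unset Printing Implicit Defensive.

Section Gen.
Variable R : comNzRingType.
Definition cX (c : R) : {poly R} := 'X + c%:P.

Lemma coef_cXn c m j : ((cX c)^+m)`_j = c^+(m-j) *+ 'C(m,j).
Proof.
elim: m j => [|m IH] j.
  by rewrite expr0 coef1; case: j => [|j]; rewrite ?bin0 ?bin0n //= mulr0n.
rewrite exprSr /cX mulrDr coefD coefMX coefMC.
case: j => [|j] /=.
  by rewrite add0r IH !subn0 !bin0 !mulr1n exprSr.
rewrite !IH binS mulrnDr subSS; case: (ltnP j m) => hjm.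
  by rewrite addrC mulrnAl -exprSr subnSK.
by rewrite (@bin_small m j.+1) ?ltnS // !mulr0n mul0r addr0 add0r.
Qed.

Definition S n a b := ((cX a)^+n * (cX b)^+n)`_n.

Lemma S_closed n a b : S n a b = \sum_(k < n.+1) (a^+(n-k) * b^+k) *+ ('C(n,k)^2).
Proof.
rewrite /S coefM; apply: eq_bigr => [[k /=]]; rewrite ltnS => hk _.
rewrite !coef_cXn subKn // bin_sub // mulrnAl mulrnAr -mulrnA mulnn.
by [].
Qed.
End Gen.

Section Key.
Variable F : fieldType.
Variable n : nat.
Hypothesis hp : (n.*2.+1)%:R = 0 :> F.
Hypothesis hnz : forall i, (0 < i <= n)%N -> i%:R != 0 :> F.

Lemma binF i : (i <= n)%N -> ('C(n+i, i)%:R : F) = (-1)^+i * 'C(n,i)%:R.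
Proof.
elim: i => [|i IH] hi; first by rewrite addn0 !bin0 expr0 mul1r.
have hi' : (i <= n)%N by apply: ltnW.
apply: (mulfI (hnz (i:=i.+1) _)); first by rewrite hi.
have hneg : ((n+i).+1)%:R = - ((n-i)%:R) :> F.
  apply/eqP; rewrite -subr_eq0 opprK -natrD addSn -addnA subnKC // addnn; exact/eqP.
rewrite addnS -natrM -(mul_bin_diag (n+i).+1 i) natrM /= IH // hneg.
rewrite [RHS]mulrCA -natrM mul_bin_left natrM exprS.
ring.
Qed.

Lemma keyS (t : F) : S n t (t + 2) = S n (- t) 2.
Proof.
rewrite [RHS]S_closed /S.
have -> : cX (t + 2) = cX t + 2%:P by rewrite /cX polyCD addrA.
rewrite [(cX t + _)^+n]exprDn mulr_sumr coef_sum; apply: eq_bigr => [[i /=]]; rewrite ltnS => hi _.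
rewrite mulrnAr coefMn mulrA -exprD -(polyC_exp i (2:F)) coefMC coef_cXn addKn.
have hb : 'C(n + (n-i), n) = 'C(n + (n-i), n-i).
  by rewrite -[in RHS]bin_sub ?leq_addl // addnK.
rewrite hb -[_ *+ 'C(n + _, _)]mulr_natr (binF (leq_subr i n)) bin_sub //.
rewrite -[_ *+ 'C(n,i)]mulr_natr -[_ *+ ('C(n,i)^2)]mulr_natr natrX [(- t)^+ _]exprNn.
ring.
Qed.
End Key.

Lemma S_homog (R : comNzRingType) n (a b c : R) : S n (c * a) (c * b) = c ^+ n * S n a b.
Proof.
rewrite !S_closed mulr_sumr; apply: eq_bigr => [[i /=]]; rewrite ltnS => hi _.
rewrite mulrnAr; congr (_ *+ _); rewrite !exprMn.
have -> : c ^+ n = c ^+ (n - i) * c ^+ i by rewrite -exprD subnK.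
ring.
Qed.

Lemma sgP (i : nat) : ((-1) ^+ i : {poly rat}) = ((-1) ^+ i)%:P.
Proof. by rewrite polyC_exp polyCN polyC1. Qed.

Lemma legendre_S n (z : rat) : legendreP n z = (2 ^+ n)^-1 * S n (z - 1) (z + 1).
Proof.
rewrite /legendreP /S; congr (_ * _).
have -> : cX (z - 1) ^+ n * cX (z + 1) ^+ n = ((cX z)^+2 - 1)^+n.
  by rewrite -exprMn /cX polyCB polyCD polyC1; congr (_ ^+ _); ring.
rewrite exprBn coef_sum -(big_mkord xpredT (fun i => (((-1) ^+ i * ((cX z)^+2) ^+ (n - i) * 1 ^+ i) *+ 'C(n, i))`_n)).
rewrite [RHS](big_cat_nat _ (n := (n./2).+1)) //=; last by rewrite ltnS leq_half_double; lia.
rewrite [X in _ = _ + X]big_nat_cond [X in _ = _ + X]big1 ?addr0; last first.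
  move=> i /andP [/andP [hi1 hi2] _]; rewrite ltn_half_double in hi1.
  rewrite expr1n mulr1 -exprM coefMn sgP coefCM coef_cXn bin_small ?mulr0n ?mulr0 ?mul0rn //.
  lia.
apply: eq_big_nat => k /andP [_ hk]; rewrite ltnS geq_half_double in hk.
rewrite expr1n mulr1 -exprM coefMn sgP coefCM coef_cXn.
have hk2 : (2 * k <= n)%N by lia.
have e1 : (2 * (n - k) - n = n - 2 * k)%N by lia.
have e2 : (2 * (n - k) = 2 * n - 2 * k)%N by lia.
rewrite e1 e2.
have hnat : ((2*n-2*k)`! = 'C(2*n-2*k, n) * 'C(n,k) * (k`! * (n-k)`! * (n-2*k)`!))%N.
  rewrite -(bin_fact (n := 2*n-2*k) (m := n)); last by lia.
  have -> : (2 * n - 2 * k - n = n - 2 * k)%N by lia.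
  rewrite -(bin_fact (n := n) (m := k)); last by lia.
  ring.
rewrite hnat -[_ *+ 'C(n,k)]mulr_natr -[_ *+ 'C(2*n-2*k, n)]mulr_natr !natrM.
have f0 : forall m, (m`!)%:R != 0 :> rat by move=> m; rewrite pnatr_eq0 -lt0n fact_gt0.
field. by rewrite !f0.
Qed.

Section Red.
Variable p : nat.
Hypothesis pr : prime p.
Local Notation F := 'F_p.

Lemma intF0 (m : int) : (m%:~R == 0 :> F) = (p %| `|m|)%N.
Proof.
rewrite [m in LHS]intEsign intrM mulf_eq0 intr_sign signr_eq0 /=.
by rewrite (dvdn_pcharf (pchar_Fp pr)).
Qed.

Definition red (x : rat) : F := (numq x)%:~R / (denq x)%:~R.
Definition Rd (x : rat) (u : F) := (denq x)%:~R != 0 :> F /\ red x = u.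

Lemma in_ZpE x : in_Zp p x = ((denq x)%:~R != 0 :> F).
Proof. by rewrite /in_Zp coprime_sym prime_coprime // intF0. Qed.

Lemma intQ0 (b : int) : b != 0 -> (b%:~R : rat) != 0.
Proof. by rewrite intr_eq0. Qed.

Lemma Rd_frac (a b : int) : b%:~R != 0 :> F -> Rd (a%:~R / b%:~R) (a%:~R / b%:~R).
Proof.
move=> bF; set x : rat := a%:~R / b%:~R.
have b0 : b != 0 by apply: contraNneq bF => ->.
have e : numq x * b = a * denq x.
  apply/eqP; rewrite -(eqr_int rat) !intrM numqE /x; apply/eqP.
  by field; rewrite intQ0.
have eF : (numq x)%:~R * b%:~R = a%:~R * (denq x)%:~R :> F by rewrite -!intrM e.
have d0 : (denq x)%:~R != 0 :> F.
  apply/negP => /eqP d0; move: eF; rewrite d0 mulr0 => /eqP; rewrite mulf_eq0 (negbTE bF) orbF.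
  rewrite intF0 => hn; have := d0; move/eqP; rewrite intF0 => hd.
  have := coprime_num_den x; rewrite /coprime => /eqP g1.
  have : (p %| gcdn `|numq x| `|denq x|)%N by rewrite dvdn_gcd hn hd.
  by rewrite g1 dvdn1 => /eqP p1; move: pr; rewrite p1.
split=> //; rewrite /red; apply/eqP; rewrite eqr_div //; apply/eqP; exact: eF.
Qed.

Lemma Rd_uniq x u v : Rd x u -> Rd x v -> u = v.
Proof. by move=> [_ <-] [_ <-]. Qed.

Lemma Rd_eq x y u : x = y -> Rd y u -> Rd x u.
Proof. by move=> ->. Qed.

Lemma Rd_nd x u : Rd x u -> u = (numq x)%:~R / (denq x)%:~R.
Proof. by move=> [_ <-]. Qed.

Lemma ratE x : x = (numq x)%:~R / (denq x)%:~R.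
Proof. by rewrite divq_num_den. Qed.

Lemma Rd_add x y u v : Rd x u -> Rd y v -> Rd (x + y) (u + v).
Proof.
move=> [dx ex] [dy ey].
have hF : (denq x * denq y)%:~R != 0 :> F by rewrite intrM mulf_neq0.
apply: (Rd_eq (y := (numq x * denq y + numq y * denq x)%:~R / (denq x * denq y)%:~R)).
  rewrite [x in LHS]ratE [y in LHS]ratE !intrD !intrM; field.
  by rewrite !intQ0 ?denq_neq0.
case: (Rd_frac (numq x * denq y + numq y * denq x) hF) => h1 h2; split => //.
rewrite h2 -ex -ey /red !intrD !intrM; field; by rewrite dx dy.
Qed.

Lemma Rd_mul x y u v : Rd x u -> Rd y v -> Rd (x * y) (u * v).
Proof.
move=> [dx ex] [dy ey].
have hF : (denq x * denq y)%:~R != 0 :> F by rewrite intrM mulf_neq0.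
apply: (Rd_eq (y := (numq x * numq y)%:~R / (denq x * denq y)%:~R)).
  rewrite [x in LHS]ratE [y in LHS]ratE !intrM; field.
  by rewrite !intQ0 ?denq_neq0.
case: (Rd_frac (numq x * numq y) hF) => h1 h2; split => //.
rewrite h2 -ex -ey /red !intrM; field; by rewrite dx dy.
Qed.

Lemma Rd_int (m : int) : Rd m%:~R m%:~R.
Proof.
apply: (Rd_eq (y := m%:~R / (1%:~R))); first by rewrite divr1.
case: (Rd_frac m (b := 1)) => [|h1 h2]; first by rewrite oner_eq0.
by split => //; rewrite h2 divr1.
Qed.

Lemma Rd_nat (m : nat) : Rd m%:R m%:R.
Proof. exact: (Rd_int m). Qed.

Lemma Rd_opp x u : Rd x u -> Rd (- x) (- u).
Proof.
move=> h; move: (Rd_mul (Rd_int (- 1)) h).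
by rewrite !intrN !mulN1r.
Qed.

Lemma Rd_sub x y u v : Rd x u -> Rd y v -> Rd (x - y) (u - v).
Proof. by move=> h1 h2; apply: Rd_add h1 (Rd_opp h2). Qed.

Lemma Rd_exp x u m : Rd x u -> Rd (x ^+ m) (u ^+ m).
Proof.
move=> h; elim: m => [|m IH]; first by rewrite !expr0; exact: (Rd_nat 1).
by rewrite !exprS; apply: Rd_mul.
Qed.

Lemma Rd_muln (x : rat) (u : F) m : Rd x u -> Rd (x *+ m) (u *+ m).
Proof. by move=> h; rewrite -[x *+ m]mulr_natr -[u *+ m]mulr_natr; apply: Rd_mul h (Rd_nat m). Qed.

Lemma Rd_inv (x : rat) (u : F) : Rd x u -> u != 0 -> Rd x^-1 u^-1.
Proof.
move=> [dx ex] u0.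
have nF : (numq x)%:~R != 0 :> F by apply: contraNneq u0; rewrite -ex /red => ->; rewrite mul0r.
apply: (Rd_eq (y := (denq x)%:~R / (numq x)%:~R)).
  by rewrite [x in LHS]ratE invf_div.
case: (Rd_frac (denq x) nF) => h1 h2; split => //.
by rewrite h2 -ex /red invf_div.
Qed.

Lemma Rd_sum m (f : 'I_m -> rat) (g : 'I_m -> F) :
  (forall i, Rd (f i) (g i)) -> Rd (\sum_(i < m) f i) (\sum_(i < m) g i).
Proof.
move=> h; apply: (big_rec2 (fun a b => Rd a b)); first exact: (Rd_nat 0).
by move=> i a b _ hab; apply: Rd_add.
Qed.

Lemma congpE a b u v : Rd a u -> Rd b v -> congp p a b = (u == v).
Proof.
move=> ha hb; have hc := Rd_sub ha hb.
rewrite /congp in_ZpE; apply/idP/idP.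
  move=> h; have hcp : Rd ((a - b) / p%:R) (red ((a - b) / p%:R)) by [].
  have hp0 : p%:R != 0 :> rat by rewrite pnatr_eq0 -lt0n prime_gt0.
  have := Rd_mul hcp (Rd_nat p).
  rewrite divfK // (pchar_Fp_0 pr) mulr0 => h0.
  by rewrite -subr_eq0 (Rd_uniq hc h0).
move=> /eqP uv; set c := a - b; move: hc; rewrite uv subrr => -[dc ec].
have n0 : (numq c)%:~R == 0 :> F.
  by move: ec; rewrite /red => /eqP; rewrite mulf_eq0 invr_eq0 (negbTE dc) orbF.
rewrite intF0 in n0.
have hdz : (p%:Z %| numq c)%Z by [].
have -> : c / p%:R = ((numq c %/ p%:Z)%Z)%:~R / (denq c)%:~R.
  rewrite [c in LHS]ratE -{1}(divzK hdz) intrM; field.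
  by rewrite intQ0 ?denq_neq0 //= pnatr_eq0 -lt0n prime_gt0.
by case: (Rd_frac ((numq c %/ p%:Z)%Z) dc).
Qed.
End Red.

Section Euler.
Variable p : nat.
Hypothesis pr : prime p.
Hypothesis po : odd p.
Local Notation F := 'F_p.
Local Notation n := (p.-1./2).

Lemma n2 : (n.*2 = p.-1)%N.
Proof. by rewrite even_halfK // -oddS prednK ?prime_gt0. Qed.

Lemma fermat (u : F) : u != 0 -> u ^+ p.-1 = 1.
Proof.
move=> u0; apply: (mulfI u0); rewrite mulr1 -exprS prednK ?prime_gt0 //.
by have := expf_card u; rewrite card_Fp.
Qed.

Lemma natF_inj i j : (i < p)%N -> (j < p)%N -> (i%:R : F) = j%:R -> i = j.
Proof.
move=> ip jp e; have := val_Fp_nat pr i; rewrite e val_Fp_nat // !modn_small //.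
Qed.

Lemma natF_neq0 i : (0 < i < p)%N -> (i%:R : F) != 0.
Proof.
move=> /andP [i0 ip]; apply/eqP => e.
by have := natF_inj ip (prime_gt0 pr) e => h; move: i0; rewrite h.
Qed.

Lemma euler (u : F) : u != 0 ->
  (if [exists r : 'I_p, u == (nat_of_ord r)%:R ^+ 2] then 1 else -1) = u ^+ n.
Proof.
move=> u0; case: ifPn.
  move=> /existsP [r /eqP ur].
  have r0 : ((nat_of_ord r)%:R : F) != 0 by apply: contraNneq u0 => h; rewrite ur h expr0n.
  by rewrite ur -exprM mul2n n2 fermat.
rewrite negb_exists => /forallP nsq.
have h2 : (u ^+ n) ^+ 2 = 1 by rewrite -exprM mulnC mul2n n2 fermat.
move/eqP: h2; rewrite sqrf_eq1 => /orP [/eqP h1|/eqP -> //].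
exfalso.
pose rs := u :: [seq (i.+1)%:R ^+ 2 | i <- iota 0 n] : seq F.
have hn0 : (0 < n)%N.
  rewrite -double_gt0 n2 -ltnS prednK ?prime_gt0 //.
  by case: p pr po => [|[|[|q]]].
have ltp : forall i, (i < n)%N -> (i.+1 < p)%N.
  move=> i hi; have := n2; lia.
have : (size rs < size ('X^(n) - 1 : {poly F})%R)%N.
  apply: max_poly_roots.
  - by rewrite -size_poly_eq0 size_Xn_sub_1.
  - rewrite /= rootE !hornerE h1 subrr eqxx /=.
    apply/allP => z /mapP [i]; rewrite mem_iota add0n => /andP [_ hi] ->.
    rewrite rootE !hornerE -exprM mul2n n2 fermat ?subrr //.
    by rewrite natF_neq0 // ltp.
  - rewrite /= map_inj_in_uniq ?iota_uniq.
      rewrite andbT; apply/mapP => -[i]; rewrite mem_iota add0n => /andP [_ hi] ue.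
      by have := nsq (Ordinal (ltp i hi)); rewrite ue eqxx.
    move=> i j; rewrite !mem_iota !add0n => /andP [_ hi] /andP [_ hj] /eqP.
    rewrite -subr_eq0 subr_sqr mulf_eq0 => /orP [|].
      by rewrite subr_eq0 => /eqP /natF_inj e; case: (e (ltp i hi) (ltp j hj)).
    rewrite -natrD => /eqP e; exfalso.
    have : (i.+1 + j.+1 < p)%N by have := n2; lia.
    have hp0 : (0 < i.+1 + j.+1)%N by [].
    move=> hlt; move: (natF_neq0 (i := i.+1 + j.+1)); rewrite hp0 hlt e eqxx => /(_ isT).
    by [].
by rewrite size_Xn_sub_1 //= size_map size_iota ltnn.
Qed.
End Euler.

Section Main.
Variable p : nat.
Hypothesis pr : prime p.
Hypothesis po : odd p.
Local Notation F := 'F_p.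
Local Notation n := (p.-1./2).

Lemma Rd1 : Rd (1 : rat) (1 : F).
Proof. by have := Rd_nat pr 1; rewrite !mulr1n. Qed.

Lemma two_neq0 : (2 : F) != 0.
Proof.
apply: natF_neq0 => //; rewrite /=.
have := prime_gt1 pr; case: p po => [|[|[|q]]] //.
Qed.

Lemma Rd_leg (z : rat) (Z : F) : Rd z Z -> Rd (legendreP n z) ((2 ^+ n)^-1 * S n (Z - 1) (Z + 1)).
Proof.
move=> hz; rewrite legendre_S; apply: (Rd_mul pr).
  apply: (Rd_inv pr); first exact: (Rd_exp pr _ (Rd_nat pr 2)).
  by rewrite expf_neq0 // two_neq0.
rewrite !S_closed; apply: (Rd_sum pr) => i; apply: (Rd_muln pr); apply: (Rd_mul pr); apply: (Rd_exp pr).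
  exact: (Rd_sub pr hz Rd1).
exact: (Rd_add pr hz Rd1).
Qed.

Lemma Rd_legsym (a : rat) (U : F) : Rd a U -> U != 0 -> Rd (legendre_sym p a) (U ^+ n).
Proof.
move=> ha U0; rewrite /legendre_sym (congpE pr ha (Rd_nat pr 0)) (negbTE U0).
have -> : [exists r : 'I_p, congp p a ((nat_of_ord r)%:R ^+ 2)] =
          [exists r : 'I_p, U == (nat_of_ord r)%:R ^+ 2].
  by apply: eq_existsb => r; rewrite (congpE pr ha (Rd_exp pr 2 (Rd_nat pr r))).
rewrite -(euler pr po U0); case: ifP => _; first exact: Rd1.
exact: (Rd_opp pr Rd1).
Qed.
End Main.

Unset Implicit Arguments.

Theorem theorem2p6 (p : nat) (x : rat) :
  prime p -> odd p -> in_Zp p x -> ~~ congp p x (-1) ->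
  congp p (legendreP p.-1./2 x)
    (legendre_sym p (2 * (x + 1)) * legendreP p.-1./2 ((3 - x) / (1 + x))).
Proof.
move=> pr po hx hx1.
have Rx : Rd x (red p x) by split=> //; rewrite -(in_ZpE pr).
set X := red p x.
have Rm1 : Rd (-1 : rat) (-1 : 'F_p) := Rd_opp pr (Rd1 pr).
have X1 : X + 1 != 0.
  move: hx1; rewrite (congpE pr Rx Rm1); apply: contra => /eqP h.
  by rewrite -subr_eq0 opprK h.
have X1' : 1 + X != 0 by rewrite addrC.
have Ry : Rd ((3 - x) / (1 + x)) ((3 - X) / (1 + X)) :=
  Rd_mul pr (Rd_sub pr (Rd_nat pr 3) Rx) (Rd_inv pr (Rd_add pr (Rd1 pr) Rx) X1').
have RU : Rd (2 * (x + 1)) (2 * (X + 1)) := Rd_mul pr (Rd_nat pr 2) (Rd_add pr Rx (Rd1 pr)).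
have U0 : 2 * (X + 1) != 0 by rewrite mulf_neq0 // (two_neq0 pr po).
rewrite (congpE pr (Rd_leg pr po Rx) (Rd_mul pr (Rd_legsym pr po RU U0) (Rd_leg pr po Ry))).
apply/eqP.
have p0 : (0 < p)%N by apply: prime_gt0.
have hp : ((p.-1./2).*2.+1)%:R = 0 :> 'F_p by rewrite (n2 pr po) prednK // pchar_Fp_0.
have hnz : forall i, (0 < i <= p.-1./2)%N -> i%:R != 0 :> 'F_p.
  move=> i /andP [i0 iN]; apply: (natF_neq0 pr); rewrite i0 /=.
  have := n2 pr po; lia.
set n := p.-1./2.
set Y := (3 - X) / (1 + X).
set c := 2 / (1 + X).
have hY1 : Y - 1 = c * (- (X - 1)) by rewrite /Y /c; field.
have hY2 : Y + 1 = c * 2 by rewrite /Y /c; field.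
have hX : X + 1 = (X - 1) + 2 by ring.
rewrite hY1 hY2 S_homog hX (keyS hp hnz).
set K := S n (- (X - 1)) 2.
have h4 : (2 * (X - 1 + 2))^+n * c^+n = 1.
  rewrite -exprMn.
  have -> : 2 * (X - 1 + 2) * c = 2 ^+ 2 by rewrite /c -hX; field.
  by rewrite -exprM mul2n (n2 pr po) (fermat pr) // (two_neq0 pr po).
have -> : (2 * (X - 1 + 2)) ^+ n * ((2 ^+ n)^-1 * (c ^+ n * K)) =
          (2 ^+ n)^-1 * K * ((2 * (X - 1 + 2))^+n * c^+n) by ring.
by rewrite h4 mulr1.
Qed.
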